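(* Consider a finite set of time periods $\mathcal{T}$ and a finite set of user types $\mathcal{K}=\{1,\dots,K\}$, where type $k$ has aggregate demand $D_k^t\ge 0$ and value of lost load $V_k^t$ in period $t$, with $V_1^t\le\cdots\le V_K^t$. Let $D_a^t=\sum_kD_k^t>0$. For capacity $r\ge0$ and random variables $\Theta^t$ supported in $[0,1]$, let $s^t=\min(D_a^t,r\Theta^t)$, $d_k^t=\frac{D_k^t}{D_a^t}s^t$, $C_s^t(r,\Theta^t)=\sum_k(V_k^t-p)(D_k^t-d_k^t)$. Fix $p$ with $p\le V_1^t$ for all $t$, $c_r>0$, $\xi\ge0$. Let $f^{\mathrm{No}}(r)=\sum_tp\,\mathbb{E}[s^t]-c_rr$ and $f^{\mathrm{Ins}}(r,\pi)=\sum_k\sum_t\pi_k^tD_k^t+\sum_tp\,\mathbb{E}[s^t]-c_rr-\sum_t\mathbb{E}[C_s^t(r,\Theta^t)]$, and define the social cost $C^{\mathrm{SO}}(r)=c_rr+\sum_t\mathbb{E}[C_s^t(r,\Theta^t)]$. Let $(r^*,\pi^* )$ be the optimal solution of Problem-Ins: minimize $\sum_k\sum_t\pi_k^tD_k^t$ over $r\ge0,\pi$ subject to $f^{\mathrm{Ins}}(r,\pi)\ge\xi$, $\pi_k^t-\pi_m^t=(V_k^t-V_m^t)\mathbb{E}[1-s^t/D_a^t]$ for all $t,m,k$, and $0\le\pi_k^t\le(V_k^t-p)\mathbb{E}[1-s^t/D_a^t]$ for all $t,k$. Let $r^\ddagger$ be the optimal solution of Problem-NoIns: maximize $r\ge0$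 subject to $f^{\mathrm{No}}(r)\ge\xi$. Then $C^{\mathrm{SO}}(r^* )\le C^{\mathrm{SO}}(r^\ddagger)$, i.e., the optimal social cost under the insurance-providing utility is no larger than under the no-insurance utility.
   Context: Expectations are over $\Theta^t$. The problems are assumed feasible with optimal solutions as described. *)

(* Defs.v *)
From HB Require Import structures.
From mathcomp Require Import all_boot all_order all_algebra.
From mathcomp Require Import all_classical all_reals all_analysis.
Set Implicit Arguments. Unset Strict Implicit. Unset Printing Implicit Defensive.
Import Order.TTheory GRing.Theory Num.Theory.
Local Open Scope ring_scope.

Section Defs.
Variables (d : measure_display) (Om : measurableType d) (R : realType).
Variable (P : probability Om R).
Variables (nT K : nat).
Variables (D V : 'I_nT -> 'I_K -> R) (Theta : 'I_nT -> Om -> R) (p : R).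

Definition expect (f : Om -> R) : R := fine (\int[P]_w (f w)%:E).

Definition Dagg (t : 'I_nT) : R := \sum_(k < K) D t k.

Definition supply (r : R) (t : 'I_nT) (w : Om) : R := Num.min (Dagg t) (r * Theta t w).

Definition served (r : R) (t : 'I_nT) (k : 'I_K) (w : Om) : R :=
  D t k / Dagg t * supply r t w.

Definition Cs (r : R) (t : 'I_nT) (w : Om) : R :=
  \sum_(k < K) (V t k - p) * (D t k - served r t k w).

Variable cr : R.

Definition fNo (r : R) : R := \sum_(t < nT) p * expect (supply r t) - cr * r.

Definition fIns (r : R) (pi : 'I_nT -> 'I_K -> R) : R :=
  \sum_(k < K) \sum_(t < nT) pi t k * D t k
  + \sum_(t < nT) p * expect (supply r t) - cr * r
  - \sum_(t < nT) expect (Cs r t).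

Definition CSO (r : R) : R := cr * r + \sum_(t < nT) expect (Cs r t).

Definition shortfall (r : R) (t : 'I_nT) : R :=
  expect (fun w => 1 - supply r t w / Dagg t).

Variable xi : R.

Definition ins_objective (pi : 'I_nT -> 'I_K -> R) : R :=
  \sum_(k < K) \sum_(t < nT) pi t k * D t k.

Definition ins_feasible (r : R) (pi : 'I_nT -> 'I_K -> R) : Prop :=
  [/\ 0 <= r, xi <= fIns r pi,
      (forall t k m, pi t k - pi t m = (V t k - V t m) * shortfall r t) &
      (forall t k, 0 <= pi t k /\ pi t k <= (V t k - p) * shortfall r t)].

Definition noins_feasible (r : R) : Prop := 0 <= r /\ xi <= fNo r.

End Defs.

(* Main.v *)
Require Import Defs.
From HB Require Import structures.
From mathcomp Require Import all_boot all_order all_algebra.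
From mathcomp Require Import all_classical all_reals all_analysis.
From mathcomp Require Import lra ring.
Import Order.TTheory GRing.Theory Num.Theory.
Local Open Scope ring_scope.

Section Aux.
Variables (d : measure_display) (Om : measurableType d) (R : realType).
Variable (P : probability Om R).

Definition good (f : Om -> R) := measurable_fun setT f /\ exists M : R, forall w, `|f w| <= M.

Lemma good_int f : good f -> P.-integrable setT (EFin \o f).
Proof.
move=> [mf [M hM]]; apply: measurable_bounded_integrable => //.
  by apply: (le_lt_trans (probability_le1 P measurableT)); rewrite ltry.
rewrite /bounded_near; near=> M0 => y _ /=; apply: le_trans (hM y) _; near: M0; exact: nbhs_pinfty_ge (num_real M).
Unshelve. all: by end_near.
Qed.

Lemma expect_le f g : good f -> good g -> (forall w, f w <= g w) ->
  expect P f <= expect P g.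
Proof.
move=> gf gg fg; rewrite /expect.
have h2 : (\int[P]_w (f w)%:E \is a fin_num)%E.
  by apply: integrable_fin_num => //; exact: good_int.
have h1 : (\int[P]_w (g w)%:E \is a fin_num)%E.
  by apply: integrable_fin_num => //; exact: good_int.
rewrite -lee_fin !fineK //.
apply: le_integral => //; try exact: good_int.
by move=> x _; rewrite lee_fin.
Qed.

Lemma expect_ge0 f : (forall w, 0 <= f w) -> 0 <= expect P f.
Proof.
move=> h; rewrite /expect; apply: fine_ge0; apply: integral_ge0 => x _.
by rewrite lee_fin.
Qed.

Lemma expectZ c f : good f -> expect P (fun w => c * f w) = c * expect P f.
Proof.
move=> gf; rewrite /expect.
have h : (\int[P]_w (f w)%:E \is a fin_num)%E.
  by apply: integrable_fin_num => //; exact: good_int.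
under eq_integral do rewrite EFinM.
rewrite integralZl //; last exact: good_int gf.
by rewrite fineM.
Qed.


Lemma good_affine a b f : good f -> good (fun w => a + b * f w).
Proof.
move=> [mf [M hM]]; split.
  apply: measurable_realfun.measurable_funD; first exact: measurable_cst.
  apply: measurable_realfun.measurable_funM => //; exact: measurable_cst.
exists (`|a| + `|b| * M) => w.
apply: (le_trans (ler_normD _ _)); rewrite lerD2l normrM.
by apply: ler_wpM2l => //.
Qed.

Lemma expect_affine a b f : good f ->
  expect P (fun w => a + b * f w) = a + b * expect P f.
Proof.
move=> gf; rewrite -expectZ //.
have gbf : good (fun w => b * f w).
  have -> : (fun w => b * f w) = (fun w => 0 + b * f w).
    by apply: funext => w; rewrite add0r.
  exact: good_affine.
rewrite /expect.
have h : (\int[P]_w (b * f w)%:E \is a fin_num)%E.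
  by apply: integrable_fin_num => //; exact: good_int.
under eq_integral do rewrite EFinD.
rewrite integralD //; last exact: good_int gbf.
  have hc : (\int[P]_w (a%:E) = a%:E)%E.
    by have := expectation_cst P a; rewrite unlock.
  by rewrite hc fineD.
exact: finite_measure_integrable_cst.
Qed.


Lemma norm_min_le (a b : R) : `|Num.min a b| <= `|a| + `|b|.
Proof.
have h1 := ler_norm (-a); have h2 := ler_norm (-b); have h3 := ler_norm a.
rewrite normrN in h1; rewrite normrN in h2.
have h4 := normr_ge0 a; have h5 := normr_ge0 b.
rewrite ler_norml; apply/andP; split.
  rewrite le_min; apply/andP; split; lra.
by rewrite ge_min; apply/orP; left; lra.
Qed.

End Aux.
Arguments good {d Om R}.
Arguments good_int {d Om R}.
Arguments expect_le {d Om R}.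
Arguments expect_ge0 {d Om R}.
Arguments expectZ {d Om R}.
Arguments good_affine {d Om R}.
Arguments expect_affine {d Om R}.
Arguments norm_min_le {R}.

Theorem proposition2
  (d : measure_display) (Om : measurableType d) (R : realType)
  (P : probability Om R) (nT K : nat)
  (D V : 'I_nT -> 'I_K -> R) (Theta : 'I_nT -> Om -> R)
  (p cr xi : R)
  (HD : forall t k, 0 <= D t k)
  (HDa : forall t, 0 < Dagg D t)
  (HV : forall t (k m : 'I_K), (k <= m)%N -> V t k <= V t m)
  (HTmeas : forall t, measurable_fun setT (Theta t))
  (HT01 : forall t w, 0 <= Theta t w <= 1)
  (Hp : forall t (k : 'I_K), (nat_of_ord k = 0%N) -> p <= V t k)
  (Hcr : 0 < cr) (Hxi : 0 <= xi)
  (rs : R) (pis : 'I_nT -> 'I_K -> R)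
  (Hopt_ins : ins_feasible P D V Theta p cr xi rs pis /\
     forall r pi, ins_feasible P D V Theta p cr xi r pi ->
       ins_objective D pis <= ins_objective D pi)
  (rdd : R)
  (Hopt_no : noins_feasible P D Theta p cr xi rdd /\
     forall r, noins_feasible P D Theta p cr xi r -> r <= rdd) :
  CSO P D V Theta p cr rs <= CSO P D V Theta p cr rdd.
Proof.
have Gs : forall r t, good (supply D Theta r t).
  move=> r t; split.
    apply: measurable_realfun.measurable_minr; first exact: measurable_cst.
    apply: measurable_realfun.measurable_funM => //; exact: measurable_cst.
  exists (`|Dagg D t| + `|r|) => w; apply: (le_trans (norm_min_le _ _)).
  rewrite lerD2l normrM; apply: ler_piMr => //.
  by have /andP[h0 h1] := HT01 t w; rewrite ger0_norm.
have Da0 : forall t, Dagg D t != 0 by move=> t; exact: lt0r_neq0.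
pose A t := \sum_(k < K) (V t k - p) * D t k.
pose g r t w := 1 + (- (Dagg D t)^-1) * supply D Theta r t w.
have Gg : forall r t, good (g r t) by move=> r t; exact: good_affine.
have Esh : forall r t, shortfall P D Theta r t = expect P (g r t).
  move=> r t; rewrite /shortfall; congr expect; apply: funext => w.
  by rewrite /g mulNr mulrC.
have ECs : forall r t, expect P (Cs D V Theta p r t) = A t * shortfall P D Theta r t.
  move=> r t; rewrite Esh -expectZ //; congr expect; apply: funext => w.
  rewrite /Cs /A /g mulr_suml; apply: eq_bigr => k _; rewrite /served.
  by field.
have sh_ge0 : forall r t, 0 <= shortfall P D Theta r t.
  move=> r t; rewrite /shortfall; apply: expect_ge0 => w.
  rewrite subr_ge0 ler_pdivrMr ?HDa // mul1r /supply ge_min lexx //.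
have Es_mono : forall r r' t, r <= r' ->
    expect P (supply D Theta r t) <= expect P (supply D Theta r' t).
  move=> r r' t hr; apply: expect_le => // w.
  rewrite /supply le_min !ge_min lexx /=; apply/orP; right.
  by have /andP[h0 h1] := HT01 t w; rewrite ler_wpM2r.
have Es_ge0 : forall r t, 0 <= r -> 0 <= expect P (supply D Theta r t).
  move=> r t hr; apply: expect_ge0 => w.
  by have /andP[h0 h1] := HT01 t w; rewrite /supply le_min (ltW (HDa t)) mulr_ge0.
have Vp : forall t k, p <= V t k.
  move=> t k; have k0 : (0 < K)%N by apply: leq_ltn_trans (ltn_ord k).
  apply: (le_trans (Hp t (Ordinal k0) erefl)); exact: HV.
have fIns_eq : forall r pi, fIns P D V Theta p cr r pi =
    ins_objective D pi + fNo P D Theta p cr r - \sum_(t < nT) expect P (Cs D V Theta p r t).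
  by move=> r pi; rewrite /fIns /fNo /ins_objective; lra.
pose pimax r t k := (V t k - p) * shortfall P D Theta r t.
have objmax : forall r, ins_objective D (pimax r) = \sum_(t < nT) expect P (Cs D V Theta p r t).
  move=> r; rewrite /ins_objective exchange_big; apply: eq_bigr => t _.
  rewrite ECs /A mulr_suml; apply: eq_bigr => k _; rewrite /pimax; lra.
have obj_le : forall r pi, (forall t k, pi t k <= pimax r t k) ->
    ins_objective D pi <= ins_objective D (pimax r).
  move=> r pi h; apply: ler_sum => k _; apply: ler_sum => t _.
  exact: ler_wpM2r.
case: Hopt_ins => [[rs0 fIs Hdiff Hbnd] Hmin].
case: Hopt_no => [[rdd0 fNd] Hmax].
have rs_le : rs <= rdd.
  apply: Hmax; split => //; apply: (le_trans fIs).
  rewrite fIns_eq -objmax.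
  have := obj_le rs pis (fun t k => proj2 (Hbnd t k)); lra.
have obj_pis : ins_objective D pis <= \sum_(t < nT) expect P (Cs D V Theta p rdd t).
  rewrite -objmax; apply: (Hmin rdd (pimax rdd)); split => //.
  - by rewrite fIns_eq objmax; lra.
  - by move=> t k m; rewrite /pimax; lra.
  - move=> t k; split; last by [].
    by apply: mulr_ge0 => //; rewrite subr_ge0.
have [p0|p0] := leP 0 p; last first.
  suff -> : rs = rdd by [].
  suff : rdd <= 0 by move=> h; apply/eqP; rewrite eq_le rs_le; lra.
  have : \sum_(t < nT) p * expect P (supply D Theta rdd t) <= 0.
    apply: sumr_le0 => t _; apply: mulr_le0_ge0; [exact: ltW | exact: Es_ge0].
  move: fNd; rewrite /fNo => h1 h2.
  have : cr * rdd <= 0 by lra.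
  by rewrite pmulr_rle0.
have Ep : \sum_(t < nT) p * expect P (supply D Theta rs t) <=
          \sum_(t < nT) p * expect P (supply D Theta rdd t).
  apply: ler_sum => t _; apply: ler_wpM2l => //; exact: Es_mono.
have fNo_le : fNo P D Theta p cr rdd <= xi.
  rewrite leNgt; apply/negP => hlt.
  pose e := (fNo P D Theta p cr rdd - xi) / cr.
  have e0 : 0 < e by apply: divr_gt0 => //; lra.
  have cre : cr * e = fNo P D Theta p cr rdd - xi by rewrite /e mulrC divfK // lt0r_neq0.
  have : rdd + e <= rdd.
    apply: Hmax; split; first lra.
    have : \sum_(t < nT) p * expect P (supply D Theta rdd t) <=
           \sum_(t < nT) p * expect P (supply D Theta (rdd + e) t).
      apply: ler_sum => t _; apply: ler_wpM2l => //; apply: Es_mono; lra.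
    move: cre; rewrite /fNo mulrDr => cre h; lra.
  lra.
rewrite /CSO; move: fIs fNo_le; rewrite fIns_eq /fNo => h1 h2; lra.
Qed.
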